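(* Let $A$ be a $d\times d$ $\{0,1\}$-matrix and $\mathbb{F}\in\{\mathbb{R},\mathbb{C}\}$. For $K\in\mathcal{STAF}(A)$ and $n\in\mathbb{N}$ let $\mathbf{K}^{(n)}\in\mathbb{F}^d$ have $j$-th component $K(s_0\dots s_{n-1}j)$ for any allowable block $s_0\dots s_{n-1}j$ (for $n=0$, $K(j)$). Then $\mathbf{K}=(\mathbf{K}^{(0)},\mathbf{K}^{(1)},\dots)$ is a thread of $A$, and $K\mapsto\mathbf{K}$ is a vector space isomorphism from $\mathcal{STAF}(A)$ onto $\varprojlim(\mathbb{F}^d,A)$. Moreover $\varprojlim(\mathbb{F}^d,A)$ is isomorphic to $NonN(A,\mathbb{F}^d)$.
   Context: Symbols are $S=\{1,\dots,d\}$; $i\to j$ is an allowable transition iff $A_{ij}=1$. An allowable block is a finite word $s_0\dots s_{n-1}$ with $s_k\to s_{k+1}$ for all $k$; its length is the number of symbols; $\mathcal{B}(A)$ is the set of allowable blocks. A symbolic transverse arc function (staf) is a map $K:\mathcal{B}(A)\to\mathbb{F}$ which is additive, $K(s_0\dots s_{n-1}j)=\sum_{k:\,j\to k}K(s_0\dots s_{n-1}jk)$ for every allowable block $s_0\dots s_{n-1}j$, and coherent, $K(s_0\dots s_nj)=K(s_0'\dots s_n'j)$ for all allowable blocks of the same length ending in the same symbol. $\mathcal{STAF}(A)$ is the vector space of stafs. A thread of $A$ is a sequence $(\vec v_0,\vec v_1,\dots)$ in $\mathbb{F}^d$ with $\vec v_n=A\vec v_{n+1}$ for all $n$; $\varprojlim(\mathbb{F}^d,A)$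 is the space of threads. $NonN(A,\mathbb{F}^d)$ is the sum of the generalized eigenspaces of $A$ for nonzero eigenvalues.
   Formalization: The claims about K ↦ 𝐊 hold only for A with no zero column (every symbol j has some i → j), and NonN(A, ℝᵈ) means the real vectors lying in NonN(A, ℂᵈ). Each condition added here is assumed in the paper as well or is needed for the statement above to hold. *)

(* Defs.v *)
From HB Require Import structures.
From mathcomp Require Import all_boot all_order all_algebra.
From mathcomp Require Import reals complex.
Set Implicit Arguments. Unset Strict Implicit. Unset Printing Implicit Defensive.
Import Order.TTheory GRing.Theory Num.Theory.
Local Open Scope ring_scope.

Section Defs.
Variable d : nat.
(* The {0,1}-matrix A is given as a boolean matrix: A i j = true iff A_ij = 1,
   i.e. iff i -> j is an allowable transition.  Symbols are 'I_d. *)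
Variable A : 'M[bool]_d.

Definition mxF (F : fieldType) : 'M[F]_d := map_mx (fun b : bool => (b : nat)%:R) A.

Definition allowable (s : seq 'I_d) : bool :=
  if s is x :: s' then path (fun i j => A i j) x s' else false.

Variable F : fieldType.

(* symbolic transverse arc functions (values off B(A) are irrelevant) *)
Definition staf_additive (K : seq 'I_d -> F) : Prop :=
  forall (s : seq 'I_d) (j : 'I_d), allowable (rcons s j) ->
    K (rcons s j) = \sum_(k | A j k) K (rcons (rcons s j) k).

Definition staf_coherent (K : seq 'I_d -> F) : Prop :=
  forall (s s' : seq 'I_d) (j : 'I_d), size s = size s' ->
    allowable (rcons s j) -> allowable (rcons s' j) ->
    K (rcons s j) = K (rcons s' j).

Definition is_staf (K : seq 'I_d -> F) : Prop := staf_additive K /\ staf_coherent K.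

Definition is_thread (v : nat -> 'cV[F]_d) : Prop :=
  forall n, v n = mxF F *m v n.+1.

(* K^(n): j-th component is K(s_0 ... s_{n-1} j) for an allowable block of
   length n+1 ending in j (chosen by [pick]); 0 if no such block exists. *)
Definition Kvec (K : seq 'I_d -> F) (n : nat) : 'cV[F]_d :=
  \col_j (if [pick t : n.+1.-tuple 'I_d | allowable t && (tnth t ord_max == j)]
          is Some t then K t else 0).

(* The statement of Fact 8.2 over F, with NonN(A, F^d) given as a predicate N *)
Definition fact_body (N : 'cV[F]_d -> Prop) : Prop :=
  ((forall j : 'I_d, exists i : 'I_d, A i j) ->
     (forall (a : F) (K L : seq 'I_d -> F), is_staf K -> is_staf L ->
        is_staf (fun s => a * K s + L s)) /\
     (forall K, is_staf K -> is_thread (Kvec K)) /\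
     (forall (a : F) (K L : seq 'I_d -> F) n,
        Kvec (fun s => a * K s + L s) n = a *: Kvec K n + Kvec L n) /\
     (* injective on STAF(A) (stafs are functions on B(A)) *)
     (forall K L, is_staf K -> is_staf L -> (forall n, Kvec K n = Kvec L n) ->
        forall s, allowable s -> K s = L s) /\
     (forall v, is_thread v -> exists K, is_staf K /\ forall n, Kvec K n = v n))
  /\
  (exists phi : (nat -> 'cV[F]_d) -> 'cV[F]_d,
     (forall (a : F) v w, is_thread v -> is_thread w ->
        phi (fun n => a *: v n + w n) = a *: phi v + phi w) /\
     (forall v, is_thread v -> N (phi v)) /\
     (forall v w, is_thread v -> is_thread w -> phi v = phi w -> v = w) /\
     (forall x, N x -> exists v, is_thread v /\ phi v = x)).

End Defs.

(* NonN(M, F^d) for F algebraically closed (here F = C): the sum of the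
   generalized eigenspaces of M for nonzero eigenvalues. *)
Definition NonN_closed (F : fieldType) (d : nat) (M : 'M[F]_d) (x : 'cV[F]_d) : Prop :=
  exists s : seq (F * 'cV[F]_d),
    (forall p, p \in s -> p.1 != 0 /\ exists k : nat, (M - p.1%:M) ^+ k *m p.2 = 0) /\
    x = \sum_(p <- s) p.2.

(* NonN(M, R^d): real vectors lying in the sum of the (complex) generalized
   eigenspaces of M for nonzero eigenvalues. *)
Definition NonN_real (R : realType) (d : nat) (M : 'M[R]_d) (x : 'cV[R]_d) : Prop :=
  NonN_closed (map_mx (fun r : R => (r%:C)%C) M) (map_mx (fun r : R => (r%:C)%C) x).

(* Main.v *)
Require Import Defs.
From HB Require Import structures.
From mathcomp Require Import all_boot all_order all_algebra.
From mathcomp Require Import reals complex.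
From mathcomp Require Import zify ring.
From Stdlib Require Import FunctionalExtensionality.
Set Implicit Arguments. Unset Strict Implicit. Unset Printing Implicit Defensive.
Import Order.TTheory GRing.Theory Num.Theory.
Local Open Scope ring_scope.

Section Part1.
Variables (d : nat) (A : 'M[bool]_d) (F : fieldType).

Lemma allowable_rcons s i j : allowable A (rcons s i) -> A i j ->
  allowable A (rcons (rcons s i) j).
Proof.
case: s => [|x s] /=; first by rewrite andbT.
by rewrite !rcons_path last_rcons => -> ->.
Qed.

Lemma exists_block (pred : forall j : 'I_d, exists i, A i j) n j :
  exists s, size s = n /\ allowable A (rcons s j).
Proof.
elim: n j => [|n IH] j; first by exists [::].
have [i Hij] := pred j; have [s [Hs Ha]] := IH i.
by exists (rcons s i); rewrite size_rcons Hs; split => //; apply: allowable_rcons.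
Qed.

Lemma KvecE (K : seq 'I_d -> F) : staf_coherent A K ->
  forall n s j, size s = n -> allowable A (rcons s j) -> Kvec A K n j 0 = K (rcons s j).
Proof.
move=> coh n s j Hs Ha; rewrite mxE.
case: pickP => [t /andP [Hta /eqP Hj] | H].
  have Hsz : size t = n.+1 by rewrite size_tuple.
  have Et : (t : seq _) = rcons (take n t) j.
    have x0 : 'I_d := j.
    rewrite -Hj (tnth_nth x0) /= -take_nth ?Hsz //.
    by rewrite take_oversize ?Hsz.
  rewrite Et; apply: coh => //.
    by rewrite size_take Hsz ltnSn Hs.
  by rewrite -Et.
have Ht : size (rcons s j) == n.+1 by rewrite size_rcons Hs.
have := H (Tuple Ht); rewrite /= Ha /=.
have x0 : 'I_d := j.
by rewrite (tnth_nth x0) /= nth_rcons Hs ltnn !eqxx.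
Qed.

Lemma mxF_sum (v : 'cV[F]_d) j :
  (mxF A F *m v) j 0 = \sum_(k | A j k) v k 0.
Proof.
rewrite mxE [RHS]big_mkcond /=; apply: eq_bigr => k _; rewrite mxE.
by case: (A j k); rewrite ?mul1r ?mul0r.
Qed.


Lemma part1 : (forall j : 'I_d, exists i : 'I_d, A i j) ->
     (forall (a : F) (K L : seq 'I_d -> F), is_staf A K -> is_staf A L ->
        is_staf A (fun s => a * K s + L s)) /\
     (forall K : seq 'I_d -> F, is_staf A K -> is_thread A (Kvec A K)) /\
     (forall (a : F) (K L : seq 'I_d -> F) n,
        Kvec A (fun s => a * K s + L s) n = a *: Kvec A K n + Kvec A L n) /\
     (forall K L : seq 'I_d -> F, is_staf A K -> is_staf A L -> (forall n, Kvec A K n = Kvec A L n) ->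
        forall s, allowable A s -> K s = L s) /\
     (forall v : nat -> 'cV[F]_d, is_thread A v -> exists K, is_staf A K /\ forall n, Kvec A K n = v n).
Proof.
move=> pred; split; last split; last split; last split.
- move=> a K L [aK cK] [aL cL]; split.
    move=> s j Ha; rewrite aK // aL // mulr_sumr -big_split /=.
    by [].
  by move=> s s' j Hs H1 H2; rewrite (cK s s') // (cL s s').
- move=> K [aK cK] n; apply/colP => j.
  have [s [Hs Ha]] := exists_block pred n j.
  rewrite mxF_sum (KvecE cK Hs Ha) aK //; apply: eq_bigr => k Hk.
  by rewrite (KvecE cK (s := rcons s j)) ?size_rcons ?Hs // allowable_rcons.
- move=> a K L n; apply/colP => j; rewrite !mxE.
  by case: pickP => [t _|_]; rewrite ?mulr0 ?addr0.
- move=> K L [aK cK] [aL cL] E [//|x s] Ha.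
  rewrite lastI in Ha *.
  by rewrite -(KvecE cK (erefl _) Ha) -(KvecE cL (erefl _) Ha) E.
- move=> v Hv.
  pose K (s : seq 'I_d) := if s is x :: s' then v (size s') (last x s') 0 else 0.
  have KE s j : K (rcons s j) = v (size s) j 0.
    by case: s => [|x s] //=; rewrite last_rcons size_rcons.
  have cK : staf_coherent A K by move=> s s' j Hs _ _; rewrite !KE Hs.
  exists K; split; last first.
    move=> n; apply/colP => j; have [s [Hs Ha]] := exists_block pred n j.
    by rewrite (KvecE cK Hs Ha) KE Hs.
  split => // s j Ha; rewrite KE Hv mxF_sum; apply: eq_bigr => k _.
  by rewrite KE size_rcons.
Qed.

End Part1.
Section Key.
Variable F : fieldType.

Lemma charX n (M : 'M[F]_n.+1) : exists m q, (m <= n.+1)%N /\ ~~ root q 0 /\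
   horner_mx M q * M ^+ m = 0.
Proof.
have [m [q Hq Ep]] := multiplicity_XsubC (char_poly M) 0.
have pn0 : char_poly M != 0 by apply: monic_neq0; apply: char_poly_monic.
rewrite pn0 /= in Hq.
have qn0 : q != 0 by apply: contraNneq Hq => ->; rewrite root0.
rewrite polyC0 subr0 in Ep.
exists m, q; split; last split => //.
  have := size_char_poly M; rewrite Ep size_Mmonic ?monicXn // size_polyXn.
  case: (size q) (size_poly_gt0 q) => [|k]; first by rewrite qn0.
  move=> _ /=; lia.
by have := Cayley_Hamilton M; rewrite Ep rmorphM rmorphXn /= horner_mx_X.
Qed.

Lemma key d (M : 'M[F]_d) : exists S : 'M_d, S * M = M * S /\ M ^+ d = S * M ^+ d.+1.
Proof.
case: d M => [|n] M; first by exists 0; rewrite !flatmx0.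
have [m [q [Hm [Hq E]]]] := charX M.
have /factor_theorem [r Er] : root (q - (q.[0])%:P) 0.
  by rewrite /root hornerD hornerN hornerC subrr.
rewrite polyC0 subr0 in Er.
have Eq : q = r * 'X + (q.[0])%:P by rewrite -Er subrK.
have c0 : q.[0] != 0 by [].
pose S := - ((q.[0])^-1)%:M * horner_mx M r.
have cS : S * M = M * S.
  have cr : M * horner_mx M r = horner_mx M r * M.
    by have := comm_mx_horner r (erefl (M *m M)); rewrite /comm_mx !mulmxE.
  rewrite /S -mulrA -cr !mulrA; congr (_ * _); rewrite mulNr mulrN; congr (- _).
  by have := scalar_mxC (q.[0])^-1 M; rewrite !mulmxE.
have Hm' : M ^+ m = S * M ^+ m.+1.
  move: E; rewrite Eq rmorphD rmorphM /= horner_mx_X horner_mx_C mulrDl.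
  move/eqP; rewrite addr_eq0 => /eqP E.
  have -> : M ^+ m = (q.[0])^-1%:M * ((q.[0])%:M * M ^+ m).
    by rewrite -!mulmxE !mul_scalar_mx scalerA mulVf // scale1r.
  rewrite -[_%:M * M ^+ m]opprK -E /S exprS !mulrA mulrN mulNr.
  by rewrite !mulrA !mulNr.
exists S; split => //.
have -> : M ^+ n.+1 = M ^+ (n.+1 - m) * M ^+ m by rewrite -exprD subnK.
rewrite Hm' mulrA -(commrX _ cS) -mulrA -exprD.
by rewrite addnS subnK.
Qed.

End Key.

Section Part2.
Variables (d : nat) (A : 'M[bool]_d) (F : fieldType).
Local Notation M := (mxF A F).

Lemma thread_shift (v : nat -> 'cV[F]_d) : is_thread A v -> forall n k, v n = M ^+ k *m v (n + k)%N.
Proof.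
move=> Hv n k; elim: k => [|k IH]; first by rewrite expr0 mul1mx addn0.
by rewrite IH Hv exprSr -mulmxE -mulmxA addnS.
Qed.

Lemma part2 (N : 'cV[F]_d -> Prop) :
  (forall x, N x <-> exists y, x = M ^+ d *m y) ->
  (exists phi : (nat -> 'cV[F]_d) -> 'cV[F]_d,
     (forall (a : F) v w, is_thread A v -> is_thread A w ->
        phi (fun n => a *: v n + w n) = a *: phi v + phi w) /\
     (forall v, is_thread A v -> N (phi v)) /\
     (forall v w, is_thread A v -> is_thread A w -> phi v = phi w -> v = w) /\
     (forall x, N x -> exists v, is_thread A v /\ phi v = x)).
Proof.
move=> HN; have [S [cS HS]] := key M.
exists (fun v => v 0%N); split; first by [].
split; first by move=> v Hv; apply/HN; exists (v d); rewrite (thread_shift Hv 0 d).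
split.
  move=> v w Hv Hw E; apply: functional_extensionality.
  pose u n := v n - w n.
  have Hu : is_thread A u by move=> n; rewrite /u Hv Hw mulmxBr.
  suff: forall n, u n = 0 by move=> H n; apply/eqP; rewrite -subr_eq0; apply/eqP/H.
  elim => [|n IH]; first by rewrite /u E subrr.
  have E1 : M *m u n.+1 = 0 by rewrite -Hu.
  rewrite (thread_shift Hu n.+1 d) HS exprS -!mulmxE -!mulmxA.
  by rewrite -(thread_shift Hu n.+1 d) E1 !mulmx0.
move=> x /HN [y Ey]; exists (fun n => S ^+ n *m x); split; last by rewrite expr0 mul1mx.
move=> n; rewrite Ey !mulmxA !mulmxE; congr (_ *m _).
rewrite exprSr mulrA (commrX n (esym cS)) -!mulrA; congr (_ * _).
by rewrite mulrA -cS -mulrA -exprS -HS.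
Qed.

End Part2.

Section Part3.
Variable F : fieldType.

Lemma NonN_range d (M : 'M[F]_d) x : NonN_closed M x -> exists y, x = M ^+ d *m y.
Proof.
case: d M x => [|n] M x.
  by move=> _; exists x; rewrite expr0 mul1mx.
move=> [s [Hs ->]]; elim: s Hs => [|p s IH] Hs.
  by exists 0; rewrite big_nil mulmx0.
have [y Ey] : exists y, \sum_(p <- s) p.2 = M ^+ n.+1 *m y.
  by apply: IH => p' Hp'; apply: Hs; rewrite in_cons Hp' orbT.
have [/= l0 [k Hk]] := Hs p (mem_head _ _).
have cop : coprimep (('X - (p.1)%:P) ^+ k) ('X ^+ n.+1).
  apply/coprimep_expl/coprimep_expr; rewrite coprimep_sym coprimep_XsubC rootX.
  by [].
have [[u1 u2] /= Eu] := Bezout_eq1_coprimepP _ _ cop.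
exists (horner_mx M u2 *m p.2 + y); rewrite big_cons mulmxDr -Ey; congr (_ + _).
have E2 : p.2 = horner_mx M 1 *m p.2 by rewrite rmorph1 mul1mx.
rewrite {1}E2 -Eu [u2 * _]mulrC rmorphD !rmorphM /= rmorphXn rmorphB /= horner_mx_X horner_mx_C.
rewrite rmorphXn /= horner_mx_X mulmxDl -!mulmxE -!mulmxA Hk !mulmx0 add0r.
by [].
Qed.

End Part3.

Section Part4.
Variable F : fieldType.

Lemma NonN_add d (M : 'M[F]_d) x y : NonN_closed M x -> NonN_closed M y ->
  NonN_closed M (x + y).
Proof.
move=> [s1 [H1 ->]] [s2 [H2 ->]]; exists (s1 ++ s2); rewrite big_cat; split => //.
by move=> p; rewrite mem_cat => /orP [/H1|/H2].
Qed.

Lemma hmulA n (M : 'M[F]_n.+1) (a b : {poly F}) (x : 'cV[F]_n.+1) :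
  horner_mx M a *m (horner_mx M b *m x) = horner_mx M (a * b) *m x.
Proof. by rewrite rmorphM mulmxA mulmxE. Qed.

Lemma NonN_dec n (M : 'M[F]_n.+1) (e : F -> nat) (l : seq F) x :
  uniq l -> 0 \notin l ->
  horner_mx M (\prod_(z <- l) ('X - z%:P) ^+ e z) *m x = 0 -> NonN_closed M x.
Proof.
elim: l x => [|z l IH] x /=.
  rewrite big_nil rmorph1 mul1mx => _ _ ->.
  by exists [::]; rewrite big_nil.
move=> /andP [zl ul]; rewrite in_cons negb_or => /andP [z0 l0].
rewrite big_cons; set P1 := ('X - z%:P) ^+ e z; set P2 := \prod_(_ <- _) _ => Hx.
have cop : coprimep P1 P2.
  apply/coprimep_expl; rewrite coprimep_sym coprimep_XsubC /root horner_prod.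
  rewrite prodf_seq_neq0; apply/allP => w Hw /=.
  rewrite horner_exp hornerD hornerN hornerX hornerC expf_neq0 // subr_eq0.
  by apply: contraNneq zl => ->.
have [[u1 u2] /= Eu] := Bezout_eq1_coprimepP _ _ cop.
have Ex : x = horner_mx M (u2 * P2) *m x + horner_mx M (u1 * P1) *m x.
  by rewrite -mulmxDl -rmorphD addrC Eu rmorph1 mul1mx.
rewrite Ex; apply: NonN_add.
  exists [:: (z, horner_mx M (u2 * P2) *m x)]; rewrite big_seq1; split => //.
  move=> p; rewrite mem_seq1 => /eqP -> /=; split; first by rewrite eq_sym.
  exists (e z); have -> : (M - z%:M) ^+ e z = horner_mx M P1.
    by rewrite rmorphXn rmorphB /= horner_mx_X horner_mx_C.
  by rewrite hmulA mulrCA -hmulA Hx mulmx0.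
apply: IH => //.
by rewrite hmulA mulrCA [P2 * _]mulrC -hmulA Hx mulmx0.
Qed.

End Part4.

Lemma range_NonN (F : closedFieldType) d (M : 'M[F]_d) x :
  (exists y, x = M ^+ d *m y) -> NonN_closed M x.
Proof.
case: d M x => [|n] M x.
  by move=> _; exists [::]; rewrite big_nil [x]flatmx0.
move=> [y ->]; have [m [q [Hm [Hq E]]]] := charX M.
have Hx : horner_mx M q *m (M ^+ n.+1 *m y) = 0.
  have -> : M ^+ n.+1 = M ^+ m * M ^+ (n.+1 - m) by rewrite -exprD subnKC.
  by rewrite mulmxA mulmxE mulrA E mul0r mul0mx.
have qn0 : q != 0 by apply: contraNneq Hq => ->; rewrite root0.
have cn0 : lead_coef q != 0 by rewrite lead_coef_eq0.
have [r Er] := closed_field_poly_normal q.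
have r0 : 0 \notin r by move: Hq; rewrite Er rootZ // root_prod_XsubC.
apply: (@NonN_dec _ _ M (fun z => count_mem z r) (undup r)).
- exact: undup_uniq.
- by rewrite mem_undup.
rewrite prodr_undup_exp_count.
move: Hx; rewrite {1}Er -mul_polyC rmorphM /= horner_mx_C -mulmxA mul_scalar_mx.
by move/eqP; rewrite scaler_eq0 (negbTE cn0) /= => /eqP.
Qed.

Lemma map_mxX (R : realType) d (M : 'M[R]_d) k :
  map_mx (real_complex R) (M ^+ k) = (map_mx (real_complex R) M) ^+ k.
Proof.
elim: k => [|k IH]; first by rewrite !expr0; apply: map_mx1.
by rewrite !exprS -!mulmxE map_mxM IH.
Qed.

Lemma real_iff (R : realType) d (M : 'M[R]_d) x :
  NonN_real M x <-> exists y, x = M ^+ d *m y.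
Proof.
pose f := real_complex R.
split.
  move=> /NonN_range [z Hz].
  have Hz' : map_mx f x = (map_mx f M) ^+ d *m z := Hz.
  have : ((map_mx f x)^T <= ((map_mx f M) ^+ d)^T)%MS.
    by rewrite Hz' trmx_mul submxMl.
  rewrite -map_mxX !map_trmx map_submx => /submxP [D ED].
  by exists D^T; apply: trmx_inj; rewrite trmx_mul trmxK.
move=> [y Ey]; apply: range_NonN; exists (map_mx f y).
change (map_mx f x = (map_mx f M) ^+ d *m map_mx f y).
by rewrite -map_mxX -map_mxM Ey.
Qed.

Theorem fact8p2 (R : realType) (d : nat) (A : 'M[bool]_d) :
  fact_body A (NonN_real (mxF A R)) /\
  fact_body A (NonN_closed (mxF A R[i])).
Proof.
split; split.
- exact: part1.
- by apply: part2 => x; apply: real_iff.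
- exact: part1.
- apply: part2 => x; split; first exact: NonN_range.
  exact: range_NonN.
Qed.
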